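(* Let $A\in\mathbb{C}^{n\times n}$, $C\in\mathbb{C}^{1\times n}$, $s=\{s_1,\dots,s_j\}\subset\mathbb{C}\setminus\Lambda(A^* )$, and let $\mathcal{K}_j(A^*,C^*,s)$ be $A^*$-variant with basis $Z_j$ such that $A^*Z_j=C^*h_j+Z_jH_{-j}$ with $h_j\in\mathbb{C}^{1\times j}$, $H_{-j}\in\mathbb{C}^{j\times j}$ and $\Lambda(H_{-j})=s$. Then the pair $(h_j,H_{-j})$ is observable, i.e. there is no nonzero $u\in\mathbb{C}^j$ with $h_ju=0$ and $H_{-j}u=\mu u$ for some $\mu\in\mathbb{C}$. Consequently, for every $B\in\mathbb{C}^{n\times m}$ the pair $\big(H_{-j}^*,\begin{bmatrix}h_j^*&Z_j^*B\end{bmatrix}\big)$ is controllable.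
   Context: For $M\in\mathbb{C}^{n\times n}$, $b\in\mathbb{C}^n$ and a multiset $s=\{s_1,\dots,s_j\}\subset(\mathbb{C}\cup\{\infty\})\setminus\Lambda(M)$, with $q(x)=\prod_{i:\,s_i\ne\infty}(x-s_i)$, the rational Krylov subspace is $\mathcal{K}_j(M,b,s)=\{q(M)^{-1}p(M)b:p\in\Pi_{j-1}\}$. A subspace $\mathcal{V}$ is $M$-variant if $M\mathcal{V}\not\subseteq\mathcal{V}$. The matrix $\begin{bmatrix}C^*&Z_j\end{bmatrix}$ has full column rank. A pair $(F,G)$ with $F\in\mathbb{C}^{j\times j}$ is controllable if $\operatorname{rank}\begin{bmatrix}G&FG&\cdots&F^{j-1}G\end{bmatrix}=j$. *)

(* Defs.v *)
(* complex numbers modelled as R[i] for R : realType (= C). *)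
From HB Require Import structures.
From mathcomp Require Import all_boot all_algebra.
From mathcomp Require Import reals complex.
Set Implicit Arguments. Unset Strict Implicit. Unset Printing Implicit Defensive.
Import GRing.Theory Num.Theory.
Local Open Scope ring_scope.

Section Defs.
Variable K : numClosedFieldType.

Definition ctrans m n (M : 'M[K]_(m, n)) : 'M[K]_(n, m) := (map_mx Num.conj M)^T.

Definition peval n (p : {poly K}) (M : 'M[K]_n) : 'M[K]_n :=
  \sum_(i < size p) p`_i *: M ^+ i.

(* q(M) = prod_i (M - s_i I), all shifts finite *)
Definition qeval n j (s : 'I_j -> K) (M : 'M[K]_n) : 'M[K]_n :=
  \prod_(i < j) (M - (s i)%:M).

(* membership in the rational Krylov subspace K_j(M, b, s)
   = { q(M)^{-1} p(M) b : deg p <= j-1 } *)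
Definition in_ratKrylov n j (M : 'M[K]_n) (b : 'cV[K]_n) (s : 'I_j -> K)
    (v : 'cV[K]_n) : Prop :=
  exists p : {poly K}, (size p <= j)%N /\
    v = invmx (qeval s M) *m (peval p M *m b).

Definition is_basis n j (Z : 'M[K]_(n, j)) (V : 'cV[K]_n -> Prop) : Prop :=
  \rank Z = j /\ (forall v, V v <-> exists x : 'cV[K]_j, v = Z *m x).

Definition variant n (M : 'M[K]_n) (V : 'cV[K]_n -> Prop) : Prop :=
  exists v, V v /\ ~ V (M *m v).

Definition observable p j (h : 'M[K]_(p, j)) (H : 'M[K]_j) : Prop :=
  ~ exists (u : 'cV[K]_j) (mu : K), u != 0 /\ h *m u = 0 /\ H *m u = mu *: u.

Definition ctrb_mx j p (F : 'M[K]_j) (G : 'M[K]_(j, p)) :=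
  \mxrow_(i < j) (F ^+ i *m G).

Definition controllable j p (F : 'M[K]_j) (G : 'M[K]_(j, p)) : Prop :=
  \rank (ctrb_mx F G) = j.

End Defs.

(* Main.v *)
Require Import Defs.
From HB Require Import structures.
From mathcomp Require Import all_boot all_algebra.
From mathcomp Require Import reals complex.
Import GRing.Theory Num.Theory.
Local Open Scope ring_scope.
Set Implicit Arguments. Unset Strict Implicit.

Section H.
Variable K : numClosedFieldType.

Lemma horner_mx_expand n (A : 'M[K]_n.+1) (p : {poly K}) :
  horner_mx A p = \sum_(i < size p) p`_i *: A ^+ i.
Proof.
rewrite -{1}[p]coefK poly_def rmorph_sum; apply: eq_bigr => i _.
by rewrite -mul_polyC rmorphM /= horner_mx_C rmorphXn /= horner_mx_X [_ * _]mul_scalar_mx.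
Qed.

Lemma col_eigen n (M : 'M[K]_n) (v : 'cV[K]_n) mu :
  v != 0 -> M *m v = mu *: v -> eigenvalue M mu.
Proof.
move=> v0 Mv.
have : \det (M - mu%:M) == 0.
  rewrite -det_tr; apply/det0P; exists v^T; first by rewrite trmx_eq0.
  by rewrite -trmx_mul mulmxBl Mv mul_scalar_mx subrr trmx0.
move/det0P=> [w w0 Hw]; apply/eigenvalueP; exists w => //.
by apply/eqP; rewrite -subr_eq0 -mul_mx_scalar -mulmxBr Hw.
Qed.

Lemma ctransM m n p (A : 'M[K]_(m, n)) (B : 'M[K]_(n, p)) :
  ctrans (A *m B) = ctrans B *m ctrans A.
Proof. by rewrite /ctrans map_mxM trmx_mul. Qed.

Lemma ctransK m n (A : 'M[K]_(m, n)) : ctrans (ctrans A) = A.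
Proof. by apply/matrixP=> i k; rewrite !mxE conjCK. Qed.

Lemma ctransZ m n a (A : 'M[K]_(m, n)) : ctrans (a *: A) = a^* *: ctrans A.
Proof. by rewrite /ctrans map_mxZ linearZ. Qed.

Lemma ctrans0 m n : ctrans (0 : 'M[K]_(m, n)) = 0.
Proof. by apply/matrixP=> i k; rewrite !mxE conjC0. Qed.

Lemma ctrans_eq0 m n (A : 'M[K]_(m, n)) : (ctrans A == 0) = (A == 0).
Proof.
apply/eqP/eqP=> [h|->]; last exact: ctrans0.
by rewrite -[A]ctransK h ctrans0.
Qed.

Lemma ctrb_blocks m j p (F : 'M[K]_j) (G : 'M[K]_(j, p)) (w : 'M[K]_(m, j)) :
  w *m ctrb_mx F G = 0 -> forall i : 'I_j, w *m (F ^+ i *m G) = 0.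
Proof.
rewrite /ctrb_mx mul_mxrow => E i.
by have := congr1 (fun M => submxrow M i) E; rewrite mxrowK submxrow0.
Qed.

Lemma ctrb_PBH j p (F : 'M[K]_j) (G : 'M[K]_(j, p)) :
  (forall (w : 'rV_j) b, w != 0 -> w *m F = b *: w -> w *m G != 0) ->
  controllable F G.
Proof.
case: j F G => [|j'] F G Hyp.
  by apply/eqP; rewrite -leqn0 rank_leq_row.
set X := ctrb_mx F G.
apply/eqP; rewrite eqn_leq rank_leq_row /= leqNgt; apply/negP => lt.
set W := kermx X.
have W0 : W *m X = 0 by rewrite mulmx_ker.
have base := ctrb_blocks (F:=F) (G:=G) (w:=W) W0.
have CH := Cayley_Hamilton F.
rewrite horner_mx_expand size_char_poly big_ord_recr /= in CH.
have lc : (char_poly F)`_j'.+1 = 1.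
  by have /monicP := char_poly_monic F; rewrite lead_coefE size_char_poly.
rewrite lc scale1r in CH.
have Fj : F ^+ j'.+1 = - \sum_(i < j'.+1) (char_poly F)`_i *: F ^+ i.
  by apply/eqP; rewrite -addr_eq0 addrC CH.
have WFk : forall k, W *m (F ^+ k *m G) = 0.
  elim/ltn_ind => k IH.
  case: (ltnP k j'.+1) => [kj|kj]; first exact: (base (Ordinal kj)).
  rewrite -(subnK kj) exprD Fj mulrN mulr_sumr -mulmxE.
  rewrite mulNmx mulmxN mulmx_suml mulmx_sumr big1 ?oppr0 // => i _.
  rewrite -!scalemxAr mulmxA mulmxE -exprD -mulmxE -mulmxA.
  rewrite -scalemxAl -scalemxAr IH ?scaler0 //.
  by rewrite -{2}(subnK kj) ltn_add2l.
have stab : (W *m F <= W)%MS.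
  rewrite sub_kermx /X /ctrb_mx mul_mxrow; apply/eqP.
  rewrite -(mxrow0 (q_ := fun _ => p)); apply/eq_mxrowP => i.
  have -> : W *m F *m (F ^+ i *m G) = W *m (F ^+ i.+1 *m G).
    by rewrite exprS mulmxA -(mulmxA W F) !mulmxA.
  by rewrite WFk.
have r0 : (0 < \rank W)%N by rewrite mxrank_ker subn_gt0.
have [a Ha] := eigenvalue_closed (restrictmx W F) r0.
have [v Hv v0] := eigenvalueP Ha.
set w := v *m row_base W.
have stw : (w *m F <= w)%MS.
  rewrite -stablemx_restrict //; apply/eigenvectorP; exists a.
  by apply/eigenspaceP.
have [b Hb] := sub_rVP stw.
have w0 : w != 0 by rewrite mulmx_free_eq0 ?row_base_free.
have wW : (w <= W)%MS.
  by apply: submx_trans (submxMl _ _) _; rewrite eq_row_base.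
move/sub_kermxP: wW => /ctrb_blocks /(_ ord0); rewrite expr0 mul1mx => wG.
by move: (Hyp w b w0 Hb); rewrite wG eqxx.
Qed.
End H.

Unset Implicit Arguments.
Set Strict Implicit.

Theorem mainTheorem3 (R : realType) (n j : nat)
  (A : 'M[R[i]]_n) (C : 'M[R[i]]_(1, n)) (s : 'I_j -> R[i])
  (Z : 'M[R[i]]_(n, j)) (h : 'M[R[i]]_(1, j)) (H : 'M[R[i]]_j) :
  (forall k, ~~ eigenvalue (ctrans A) (s k)) ->
  variant (ctrans A) (in_ratKrylov (ctrans A) (ctrans C) s) ->
  is_basis Z (in_ratKrylov (ctrans A) (ctrans C) s) ->
  ctrans A *m Z = ctrans C *m h + Z *m H ->
  char_poly H = \prod_(k < j) ('X - (s k)%:P) ->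
  observable h H /\
  (forall (m : nat) (B : 'M[R[i]]_(n, m)),
     controllable (ctrans H) (row_mx (ctrans h) (ctrans Z *m B))).
Proof.
move=> hs _ [rkZ _] HZ chH.
have obs : observable h H.
  move=> [u [mu [u0 [hu Hu]]]].
  have Zu0 : Z *m u != 0.
    rewrite -trmx_eq0 trmx_mul mulmx_free_eq0 ?trmx_eq0 //.
    by rewrite /row_free mxrank_tr rkZ.
  have MZu : ctrans A *m (Z *m u) = mu *: (Z *m u).
    by rewrite mulmxA HZ mulmxDl -!mulmxA hu mulmx0 add0r Hu scalemxAr.
  have eH : eigenvalue H mu := col_eigen u0 Hu.
  move: eH; rewrite eigenvalue_root_char chH /root horner_prod.
  move/prodf_eq0 => [k _]; rewrite hornerXsubC subr_eq0 => /eqP mus.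
  by have := hs k; rewrite -mus (col_eigen Zu0 MZu).
split => // m B; apply: ctrb_PBH => w b w0 wF; apply/negP => /eqP wG.
move: wG; rewrite mul_mx_row => /eqP; rewrite row_mx_eq0 => /andP [/eqP wh _].
apply: obs; exists (ctrans w), b^*; split; first by rewrite ctrans_eq0.
split.
  by rewrite -[h]ctransK -ctransM wh ctrans0.
by rewrite -[H]ctransK -ctransM wF ctransZ.
Qed.
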